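(* For any constants $\mu>0$ and $\kappa>0$, the function $$\eta_g(\varepsilon)=\mu\bigl(1-\kappa\,Q^{-1}(\varepsilon)\bigr)(1-\varepsilon),\qquad \varepsilon\in(0,1),$$ is strictly concave on $(0,1)$; equivalently, $\eta_g''(\varepsilon)<0$ for all $\varepsilon\in(0,1)$.
   Context: $Q(x)=\int_x^\infty \frac{1}{\sqrt{2\pi}}e^{-t^2/2}\,dt$ is the standard normal tail function and $Q^{-1}:(0,1)\to\mathbb{R}$ its inverse. *)

(* Defs.v *)
From Stdlib Require Import Reals.
Open Scope R_scope.

Definition phi (t : R) : R := / sqrt (2 * PI) * exp (- t ^ 2 / 2).

Definition is_normal_tail (Q : R -> R) : Prop :=
  forall x eps, 0 < eps -> exists B, forall b (pr : Riemann_integrable phi x b),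
    B <= b -> Rabs (RiemannInt pr - Q x) < eps.

Definition is_inverse_on_01 (Q Qinv : R -> R) : Prop :=
  forall e, 0 < e < 1 -> Q (Qinv e) = e.

Definition strictly_concave_on (a b : R) (f : R -> R) : Prop :=
  forall x y t, a < x < b -> a < y < b -> x <> y -> 0 < t < 1 ->
    t * f x + (1 - t) * f y < f (t * x + (1 - t) * y).

Definition eta_g (mu kappa : R) (Qinv : R -> R) (e : R) : R :=
  mu * (1 - kappa * Qinv e) * (1 - e).

(* Main.v *)
Require Import Defs.
From Stdlib Require Import Reals Lra.
Open Scope R_scope.

Lemma sq2pi_pos : 0 < sqrt (2 * PI).
Proof. apply sqrt_lt_R0. generalize PI_RGT_0; lra. Qed.

Lemma phi_pos t : 0 < phi t.
Proof. unfold phi. apply Rmult_lt_0_compat. apply Rinv_0_lt_compat, sq2pi_pos. apply exp_pos. Qed.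

Lemma phi_deriv t : derivable_pt_lim phi t (- t * phi t).
Proof.
  unfold phi.
  assert (H1 : derivable_pt_lim (fun y => - y ^ 2 / 2) t (- t)).
  { apply derivable_pt_lim_ext with (f := fun y => / 2 * (- (y ^ 2))).
    { intro; field. }
    replace (- t) with (/2 * (- (INR 2 * t ^ pred 2))) by (simpl; field).
    apply (derivable_pt_lim_scal (fun y => - y^2)).
    apply (derivable_pt_lim_opp (fun y => y^2)). apply derivable_pt_lim_pow. }
  assert (H2 := derivable_pt_lim_comp _ exp t _ _ H1 (derivable_pt_lim_exp _)).
  replace (- t * (/ sqrt (2 * PI) * exp (- t ^ 2 / 2))) with
     (/ sqrt (2 * PI) * (exp (- t ^ 2 / 2) * - t)) by ring.
  apply (derivable_pt_lim_scal (fun y => exp (- y ^ 2 / 2))). exact H2.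
Qed.

Definition psi (t : R) : R := sqrt (2 * PI) * exp (t ^ 2 / 2).

Lemma phi_psi t : phi t * psi t = 1.
Proof.
  unfold phi, psi. assert (H := sq2pi_pos).
  replace (/ sqrt (2 * PI) * exp (- t ^ 2 / 2) * (sqrt (2 * PI) * exp (t ^ 2 / 2)))
   with ((/ sqrt (2 * PI) * sqrt (2 * PI)) * (exp (- t ^ 2 / 2) * exp (t ^ 2 / 2))) by ring.
  rewrite <- exp_plus. replace (- t ^ 2 / 2 + t ^ 2 / 2) with 0 by field.
  rewrite exp_0. field. lra.
Qed.

Lemma psi_deriv t : derivable_pt_lim psi t (t * psi t).
Proof.
  unfold psi.
  assert (H1 : derivable_pt_lim (fun y => y ^ 2 / 2) t t).
  { apply derivable_pt_lim_ext with (f := fun y => / 2 * (y ^ 2)).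
    { intro; field. }
    replace t with (/2 * (INR 2 * t ^ pred 2)) at 2 by (simpl; field).
    apply (derivable_pt_lim_scal (fun y => y^2)). apply derivable_pt_lim_pow. }
  assert (H2 := derivable_pt_lim_comp _ exp t _ _ H1 (derivable_pt_lim_exp _)).
  replace (t * (sqrt (2 * PI) * exp (t ^ 2 / 2))) with
     (sqrt (2 * PI) * (exp (t ^ 2 / 2) * t)) by ring.
  apply (derivable_pt_lim_scal (fun y => exp (y ^ 2 / 2))). exact H2.
Qed.

Lemma phi_cont t : continuity_pt phi t.
Proof. apply (derivable_continuous_pt phi t (exist _ _ (phi_deriv t))). Qed.

Lemma phi_int a b : Riemann_integrable phi a b.
Proof.
  destruct (Rle_dec a b).
  - apply continuity_implies_RiemannInt; auto. intros; apply phi_cont.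
  - apply RiemannInt_P1, continuity_implies_RiemannInt; [lra|]. intros; apply phi_cont.
Qed.

Lemma small_zero x : (forall eps, 0 < eps -> Rabs x < eps) -> x = 0.
Proof.
  intros H. destruct (Req_dec x 0) as [|n]; auto.
  assert (0 < Rabs x) by (apply Rabs_pos_lt; auto).
  specialize (H _ H0). lra.
Qed.

Lemma Q_diff Q : is_normal_tail Q -> forall y z, Q y - Q z = RiemannInt (phi_int y z).
Proof.
  intros HQ y z. apply Rminus_diag_uniq. apply small_zero. intros eps Heps.
  destruct (HQ y (eps/2)) as [B1 HB1]; [lra|].
  destruct (HQ z (eps/2)) as [B2 HB2]; [lra|].
  set (b := Rmax B1 B2).
  specialize (HB1 b (phi_int y b) (Rmax_l _ _)).
  specialize (HB2 b (phi_int z b) (Rmax_r _ _)).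
  rewrite <- (RiemannInt_P26 (phi_int y z) (phi_int z b) (phi_int y b)) in HB1.
  replace (Q y - Q z - RiemannInt (phi_int y z)) with
    (- (RiemannInt (phi_int y z) + RiemannInt (phi_int z b) - Q y) + (RiemannInt (phi_int z b) - Q z)) by ring.
  eapply Rle_lt_trans. apply Rabs_triang. rewrite Rabs_Ropp. lra.
Qed.

Lemma Q_deriv Q : is_normal_tail Q -> forall x, derivable_pt_lim Q x (- phi x).
Proof.
  intros HQ x.
  assert (h : x - 1 <= x + 1) by lra.
  assert (C0 : forall t, x - 1 <= t <= x + 1 -> continuity_pt phi t) by (intros; apply phi_cont).
  assert (D := RiemannInt_P27 h C0 (x:=x) ltac:(lra)).
  apply derivable_pt_lim_locally_ext with (f := fun z => Q (x-1) - primitive h (FTC_P1 h C0) z) (a := x-1) (b := x+1).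
  { lra. }
  { intros z Hz. unfold primitive.
    destruct (Rle_dec (x-1) z) as [r|r]; [|lra].
    destruct (Rle_dec z (x+1)) as [r0|r0]; [|lra].
    rewrite (RiemannInt_P5 _ (phi_int (x-1) z)). rewrite <- (Q_diff Q HQ). ring. }
  replace (- phi x) with (0 - phi x) by ring.
  apply (derivable_pt_lim_minus (fct_cte (Q (x-1)))). apply derivable_pt_lim_const. exact D.
Qed.

Lemma Q_decr Q : is_normal_tail Q -> forall x y, x < y -> Q y < Q x.
Proof.
  intros HQ x y Hxy.
  destruct (MVT_cor2 Q (fun t => - phi t) x y Hxy) as [c [Hc _]].
  { intros; apply Q_deriv; auto. }
  assert (0 < phi c * (y - x)) by (apply Rmult_lt_0_compat; [apply phi_pos|lra]). lra.
Qed.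

Lemma cauchy f f' g g' a b : a < b ->
  (forall c, a <= c <= b -> derivable_pt_lim f c (f' c)) ->
  (forall c, a <= c <= b -> derivable_pt_lim g c (g' c)) ->
  exists c, a < c < b /\ f' c * (g b - g a) = g' c * (f b - f a).
Proof.
  intros Hab Hf Hg.
  destruct (MVT_cor2 (fun t => f t * (g b - g a) - g t * (f b - f a))
    (fun t => f' t * (g b - g a) - g' t * (f b - f a)) a b Hab) as [c [E Hc]].
  { intros c Hc.
    apply (derivable_pt_lim_minus (fun t => f t * (g b - g a)) (fun t => g t * (f b - f a))).
    - apply derivable_pt_lim_ext with (f := fun t => (g b - g a) * f t). intro; ring.
      rewrite Rmult_comm. apply (derivable_pt_lim_scal f). auto.
    - apply derivable_pt_lim_ext with (f := fun t => (f b - f a) * g t). intro; ring.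
      rewrite Rmult_comm. apply (derivable_pt_lim_scal g). auto. }
  exists c. split; auto.
  assert (E2 : (f' c * (g b - g a) - g' c * (f b - f a)) * (b - a) = 0) by (rewrite <- E; ring).
  apply Rmult_integral in E2. destruct E2; lra.
Qed.

Lemma mills Q Qinv : is_normal_tail Q -> is_inverse_on_01 Q Qinv ->
  forall x, x < 0 -> (1 - Q x) * (- x) <= phi x.
Proof.
  intros HQ HI x Hx.
  destruct (Rle_dec ((1 - Q x) * (- x)) (phi x)) as [|n]; auto. exfalso.
  apply Rnot_le_lt in n.
  assert (Hp := phi_pos x).
  set (d := (1 - Q x) - phi x / (- x)).
  assert (Hd : 0 < d).
  { unfold d. apply Rlt_0_minus. apply (Rmult_lt_reg_r (- x)); [lra|].
    unfold Rdiv. rewrite Rmult_assoc, Rinv_l; lra. }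
  assert (Hpx : 0 < phi x / (- x)) by (apply Rdiv_lt_0_compat; lra).
  set (d2 := Rmin d (1/2)).
  assert (Hd2 : 0 < d2 <= d /\ d2 <= 1/2).
  { unfold d2; split; [split|]. apply Rmin_pos; lra. apply Rmin_l. apply Rmin_r. }
  set (y := Qinv (1 - d2)).
  assert (HQx : Q x < 1 - d2) by (unfold d in *; lra).
  assert (HQy : Q y = 1 - d2).
  { apply HI. lra. }
  assert (Hyx : y < x).
  { destruct (Rlt_le_dec y x) as [|r]; auto. destruct r as [r|r].
    - apply (Q_decr Q HQ) in r. lra.
    - rewrite r in HQx. lra. }
  (* R t = Q t - phi t / x nondecreasing on (-oo, x] *)
  destruct (MVT_cor2 (fun t => Q t - phi t * / x) (fun t => - phi t + t * phi t / x) y x Hyx)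
    as [c [E Hc]].
  { intros c Hc.
    replace (- phi c + c * phi c / x) with (- phi c - (- c * phi c) * / x) by (field; lra).
    apply (derivable_pt_lim_minus Q (fun t => phi t * / x)). apply Q_deriv; auto.
    apply derivable_pt_lim_ext with (f := fun t => / x * phi t). intro; ring.
    rewrite Rmult_comm. apply (derivable_pt_lim_scal phi). apply phi_deriv. }
  assert (Hcp : 0 <= - phi c + c * phi c / x).
  { replace (- phi c + c * phi c / x) with (phi c * ((c - x) / x)) by (field; lra).
    apply Rmult_le_pos. left; apply phi_pos.
    unfold Rdiv. replace ((c - x) * / x) with ((x - c) * / (- x)) by (field; lra).
    apply Rmult_le_pos. lra. left; apply Rinv_0_lt_compat; lra. }
  assert (0 <= (Q x - phi x * / x) - (Q y - phi y * / x)).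
  { rewrite E. apply Rmult_le_pos; lra. }
  assert (Hpy : 0 < phi y * / (- x)) by (apply Rdiv_lt_0_compat; [apply phi_pos|lra]).
  replace (phi y * / x) with (- (phi y * / (- x))) in H by (field; lra).
  replace (phi x * / x) with (- (phi x / (- x))) in H by (field; lra).
  rewrite HQy in H. unfold d in *. lra.
Qed.

Definition Hf (Q : R -> R) x := (1 - Q x) * psi x + x.

Lemma H_incr Q Qinv : is_normal_tail Q -> is_inverse_on_01 Q Qinv ->
  forall d c, d < c -> Q d < 1 -> Hf Q d < Hf Q c.
Proof.
  intros HQ HI d c Hdc Hd.
  destruct (MVT_cor2 (Hf Q) (fun x => 2 + x * (1 - Q x) * psi x) d c Hdc) as [k [E Hk]].
  { intros k Hk. unfold Hf.
    replace (2 + k * (1 - Q k) * psi k) with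
      (((0 - - phi k) * psi k + (1 - Q k) * (k * psi k)) + 1)
      by (assert (E := phi_psi k); nra).
    apply (derivable_pt_lim_plus (fun x => (1 - Q x) * psi x) id).
    - apply (derivable_pt_lim_mult (fun x => 1 - Q x) psi).
      + apply (derivable_pt_lim_minus (fct_cte 1) Q). apply derivable_pt_lim_const.
        apply Q_deriv; auto.
      + apply psi_deriv.
    - apply derivable_pt_lim_id. }
  assert (HQk : Q k < 1).
  { destruct Hk as [Hk _]. apply (Q_decr Q HQ) in Hk. lra. }
  assert (Hpos : 0 < 2 + k * (1 - Q k) * psi k).
  { assert (Hps : 0 < psi k).
    { assert (H1 := phi_psi k). assert (H2 := phi_pos k).
      destruct (Rlt_le_dec 0 (psi k)) as [|r]; auto. nra. }
    destruct (Rle_dec 0 k).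
    - assert (0 <= k * (1 - Q k) * psi k).
      { apply Rmult_le_pos; [apply Rmult_le_pos|]; lra. }
      lra.
    - assert (M := mills Q Qinv HQ HI k ltac:(lra)).
      assert (H1 := phi_psi k).
      assert ((1 - Q k) * - k * psi k <= phi k * psi k) by (apply Rmult_le_compat_r; lra).
      nra. }
  assert (0 < (2 + k * (1 - Q k) * psi k) * (c - d)) by (apply Rmult_lt_0_compat; lra).
  lra.
Qed.

Lemma core Q Qinv mu kappa : is_normal_tail Q -> is_inverse_on_01 Q Qinv ->
  0 < mu -> 0 < kappa -> forall e1 e2 t, 0 < e1 -> e1 < e2 -> e2 < 1 -> 0 < t < 1 ->
  t * eta_g mu kappa Qinv e1 + (1 - t) * eta_g mu kappa Qinv e2 <
  eta_g mu kappa Qinv (t * e1 + (1 - t) * e2).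
Proof.
  intros HQ HI Hmu Hk e1 e2 t H1 H12 H2 Ht.
  set (m := t * e1 + (1 - t) * e2).
  assert (Hm : e1 < m < e2) by (unfold m; nra).
  unfold eta_g.
  set (x1 := Qinv e1). set (x2 := Qinv e2). set (xm := Qinv m).
  assert (Q1 : Q x1 = e1) by (apply HI; lra).
  assert (Q2 : Q x2 = e2) by (apply HI; lra).
  assert (Qm : Q xm = m) by (apply HI; lra).
  assert (Hord : forall a b, Q a < Q b -> b < a).
  { intros a b Hab. destruct (Rlt_le_dec b a) as [|r]; auto. destruct r as [r|r].
    - apply (Q_decr Q HQ) in r. lra.
    - rewrite r in Hab. lra. }
  assert (O1 : xm < x1) by (apply Hord; lra).
  assert (O2 : x2 < xm) by (apply Hord; lra).
  set (W := fun x => x * (1 - Q x)).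
  assert (DW : forall c, derivable_pt_lim W c ((1 - Q c) + c * phi c)).
  { intro c. replace ((1 - Q c) + c * phi c) with (1 * (1 - Q c) + c * (0 - - phi c)) by ring.
    apply (derivable_pt_lim_mult id (fun x => 1 - Q x)). apply derivable_pt_lim_id.
    apply (derivable_pt_lim_minus (fct_cte 1) Q). apply derivable_pt_lim_const.
    apply Q_deriv; auto. }
  destruct (cauchy W (fun c => (1 - Q c) + c * phi c) Q (fun c => - phi c) xm x1 O1)
    as [c [Hc Ec]]; [intros; apply DW | intros; apply Q_deriv; auto |].
  destruct (cauchy W (fun c => (1 - Q c) + c * phi c) Q (fun c => - phi c) x2 xm O2)
    as [d [Hd Ed]]; [intros; apply DW | intros; apply Q_deriv; auto |].
  assert (HW : forall c, (1 - Q c) + c * phi c = Hf Q c * phi c).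
  { intro k. unfold Hf. rewrite Rmult_plus_distr_r, Rmult_assoc, (Rmult_comm (psi k)), phi_psi. ring. }
  rewrite HW in Ec, Ed. rewrite Q1, Qm in Ec. rewrite Qm, Q2 in Ed.
  unfold W in Ec, Ed. rewrite Q1, Qm in Ec. rewrite Qm, Q2 in Ed.
  assert (Pc := phi_pos c). assert (Pd := phi_pos d).
  assert (Ec' : x1 * (1 - e1) - xm * (1 - m) = Hf Q c * (m - e1)).
  { apply (Rmult_eq_reg_l (phi c)); [|lra]. nra. }
  assert (Ed' : xm * (1 - m) - x2 * (1 - e2) = Hf Q d * (e2 - m)).
  { apply (Rmult_eq_reg_l (phi d)); [|lra]. nra. }
  assert (Hcd : Hf Q d < Hf Q c).
  { apply (H_incr Q Qinv HQ HI). lra. assert (Q d < Q x2) by (apply (Q_decr Q HQ); lra). lra. }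
  assert (Em1 : m - e1 = (1 - t) * (e2 - e1)) by (unfold m; ring).
  assert (Em2 : e2 - m = t * (e2 - e1)) by (unfold m; ring).
  fold m.
  assert (P : 0 < mu * kappa * t * (1 - t) * (e2 - e1) * (Hf Q c - Hf Q d)).
  { repeat apply Rmult_lt_0_compat; lra. }
  assert (Goal_eq : mu * (1 - kappa * xm) * (1 - m) - (t * (mu * (1 - kappa * x1) * (1 - e1)) + (1 - t) * (mu * (1 - kappa * x2) * (1 - e2)))
     = mu * kappa * (t * (x1 * (1 - e1) - xm * (1 - m)) - (1 - t) * (xm * (1 - m) - x2 * (1 - e2)))).
  { unfold m; ring. }
  rewrite Ec', Ed', Em1, Em2 in Goal_eq.
  assert (mu * kappa * (t * (Hf Q c * ((1 - t) * (e2 - e1))) - (1 - t) * (Hf Q d * (t * (e2 - e1)))) = mu * kappa * t * (1 - t) * (e2 - e1) * (Hf Q c - Hf Q d)) by ring.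
  lra.
Qed.

Theorem mainTheorem2 (Q Qinv : R -> R) (mu kappa : R) :
  is_normal_tail Q -> is_inverse_on_01 Q Qinv ->
  0 < mu -> 0 < kappa ->
  strictly_concave_on 0 1 (eta_g mu kappa Qinv).
Proof.
  intros HQ HI Hmu Hk x y t Hx Hy Hxy Ht.
  destruct (Rlt_le_dec x y) as [r|r].
  - apply (core Q Qinv mu kappa); auto; lra.
  - assert (y < x) by lra.
    assert (C := core Q Qinv mu kappa HQ HI Hmu Hk y x (1 - t) ltac:(lra) H ltac:(lra) ltac:(lra)).
    replace (t * x + (1 - t) * y) with ((1 - t) * y + (1 - (1 - t)) * x) by ring.
    lra.
Qed.
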